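(* For every 3-periodic of the elliptic billiard, the ratio of the area $A'$ of its outer triangle to its area $A$ is $$\frac{A'}{A}=\frac{2}{JL-4}.$$
   Context: The elliptic billiard is $\mathcal{E}: x^2/a^2+y^2/b^2=1$, $a>b>0$, $c=\sqrt{a^2-b^2}$. A 3-periodic is a triangle $P_1P_2P_3$ inscribed in $\mathcal{E}$ that is a closed billiard trajectory (at each vertex the normal to $\mathcal{E}$ bisects the angle between the two incident sides). Its outer triangle has as sides the tangent lines to $\mathcal{E}$ at $P_1,P_2,P_3$. $L$ is the perimeter (the same for all 3-periodics) and $J$ is Joachimsthal's constant, $J=\frac12\nabla f(P_i)\cdot\hat v>0$ with $f=x^2/a^2+y^2/b^2$ and $\hat v$ the unit direction of the trajectory at $P_i$; explicitly with $\delta=\sqrt{a^4-a^2b^2+b^4}$, $J=\sqrt{2\delta-a^2-b^2}/c^2$ and $L=2(\delta+a^2+b^2)J$. *)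

(* Defs.v *)
From Stdlib Require Import Reals.
Open Scope R_scope.

Definition pt := (R * R)%type.

Definition on_ellipse (a b : R) (P : pt) : Prop :=
  (fst P)^2 / a^2 + (snd P)^2 / b^2 = 1.

Definition dist2 (P Q : pt) : R :=
  sqrt ((fst Q - fst P)^2 + (snd Q - snd P)^2).

(* Billiard reflection law at vertex P with incident sides P->Q and P->S:
   the normal n = (1/2) grad f (P) = (x/a^2, y/b^2) bisects the angle QPS,
   i.e. the sum of the unit vectors along PQ and PS is parallel to n. *)
Definition reflects_at (a b : R) (Q P S : pt) : Prop :=
  let ux := (fst Q - fst P) / dist2 P Q in
  let uy := (snd Q - snd P) / dist2 P Q in
  let wx := (fst S - fst P) / dist2 P S in
  let wy := (snd S - snd P) / dist2 P S in
  let nx := fst P / a^2 in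
  let ny := snd P / b^2 in
  (ux + wx) * ny - (uy + wy) * nx = 0.

Definition three_periodic (a b : R) (P1 P2 P3 : pt) : Prop :=
  on_ellipse a b P1 /\ on_ellipse a b P2 /\ on_ellipse a b P3 /\
  P1 <> P2 /\ P2 <> P3 /\ P3 <> P1 /\
  reflects_at a b P3 P1 P2 /\ reflects_at a b P1 P2 P3 /\
  reflects_at a b P2 P3 P1.

(* Intersection of the tangent lines to the ellipse at P and Q:
   the tangent at P is  (xP/a^2) X + (yP/b^2) Y = 1;  solved by Cramer's rule. *)
Definition tangent_meet (a b : R) (P Q : pt) : pt :=
  let p1 := fst P / a^2 in let q1 := snd P / b^2 in
  let p2 := fst Q / a^2 in let q2 := snd Q / b^2 in
  let d := p1 * q2 - p2 * q1 in
  ((q2 - q1) / d, (p1 - p2) / d).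

Definition tri_area (A B C : pt) : R :=
  Rabs ((fst B - fst A) * (snd C - snd A) - (fst C - fst A) * (snd B - snd A)) / 2.

(* Area of the outer triangle of P1P2P3, whose sides are the tangents at
   P1, P2, P3; its vertices are the pairwise intersections of these tangents. *)
Definition outer_area (a b : R) (P1 P2 P3 : pt) : R :=
  tri_area (tangent_meet a b P2 P3) (tangent_meet a b P3 P1) (tangent_meet a b P1 P2).

Definition delta (a b : R) : R := sqrt (a^4 - a^2 * b^2 + b^4).
Definition csq (a b : R) : R := a^2 - b^2.
Definition Jconst (a b : R) : R := sqrt (2 * delta a b - a^2 - b^2) / csq a b.
Definition Lper (a b : R) : R := 2 * (delta a b + a^2 + b^2) * Jconst a b.

(* Main.v *)
Require Import Defs.
From Stdlib Require Import Reals Lra.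
From Coquelicot Require Complex.
Open Scope R_scope.
Definition Treal (F Q Xi Yi Xj Yj : R) : R :=
  (1 + (Xi*Xj+Yi*Yj)) - (Q+F)*(1 + (Xi*Xj - Yi*Yj)) - Q*(1 - (Xi*Xj - Yi*Yj)).
Lemma sq_eq (x y : R) : x^2 = y^2 -> y = x \/ y = -x.
Proof. intros H. assert ((y-x)*(y+x) = 0) by nra. destruct (Rmult_integral _ _ H0); [left|right]; lra. Qed.

Lemma key3 (al be Q P : R) : al <> 0 -> be <> 0 -> al + be = 1 -> 
  2*be - 2*Q = 0 -> 2*al - 2*P = 0 -> -2*P*be - 2*Q*al = 0 -> False.
Proof. intros. assert (Q = be) by lra. assert (P = al) by lra. subst. 
  assert (al*be = 0) by lra. destruct (Rmult_integral _ _ H5); auto. Qed.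

Lemma diam_contra F Q X1 Y1 X2 Y2 X3 Y3 :
  Y1^2 = 1 - X1^2 -> Y2^2 = 1 - X2^2 -> Y3^2 = 1 - X3^2 ->
  (X1,Y1) <> (X2,Y2) -> (X2,Y2) <> (X3,Y3) -> (X1,Y1) <> (X3,Y3) ->
  Treal F Q X1 Y1 X2 Y2 = 0 -> Treal F Q X2 Y2 X3 Y3 = 0 -> Treal F Q X1 Y1 X3 Y3 = 0 ->
  X1^2 - Y1^2 = X2^2 - Y2^2 -> X1^2 - Y1^2 = X3^2 - Y3^2 -> False.
Proof.
  intros H1 H2 H3 N12 N23 N13 T12 T23 T13 E2 E3.
  assert (A2 : X2^2 = X1^2) by nra. assert (B2 : Y2^2 = Y1^2) by nra.
  assert (A3 : X3^2 = X1^2) by nra. assert (B3 : Y3^2 = Y1^2) by nra.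
  clear H2 H3 E2 E3.
  assert (HX : X1 <> 0 -> X1^2 <> 0) by (intros; apply pow_nonzero; auto).
  assert (HY : Y1 <> 0 -> Y1^2 <> 0) by (intros; apply pow_nonzero; auto).
  unfold Treal in *.
  destruct (sq_eq _ _ (eq_sym A2)) as [a2|a2]; destruct (sq_eq _ _ (eq_sym B2)) as [b2|b2];
  destruct (sq_eq _ _ (eq_sym A3)) as [a3|a3]; destruct (sq_eq _ _ (eq_sym B3)) as [b3|b3];
  subst X2 Y2 X3 Y3; try congruence;
  destruct (Req_dec X1 0) as [x0|x0]; try (subst X1; rewrite ?Ropp_0 in *; congruence);
  destruct (Req_dec Y1 0) as [y0|y0]; try (subst Y1; rewrite ?Ropp_0 in *; congruence);
  specialize (HX x0); specialize (HY y0);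
  ring_simplify in T12; ring_simplify in T23; ring_simplify in T13;
  rewrite ?H1 in T12, T23, T13;
  eapply (key3 (X1^2) (Y1^2) Q (Q+F)); auto; try lra; try (rewrite H1; ring); 
  rewrite H1; ring_simplify; ring_simplify in T12; ring_simplify in T23; ring_simplify in T13; lra.
Qed.

Module Cx.
Import Coquelicot.Complex.
Local Open Scope C_scope.

Lemma Cint (x y : C) : x * y = (RtoC 0) -> x = (RtoC 0) \/ y = (RtoC 0).
Proof.
  intros H. destruct (Ceq_dec x (RtoC 0)) as [Hx|Hx]; [left; auto|right].
  replace y with (/x * (x*y)) by (field; auto). rewrite H. ring.
Qed.

Definition Fc (F Q x y : C) := (x+y)*(x+y) - F*((1%R+x*y)*(1%R+x*y)) - 4%R*Q*(x*y).
Definition Gc (F Q x : C) :=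
  let A := 1%R - F - 2%R*Q in
  F*(4%R*Q - (1%R-F)*(1%R-F)) * (x*x*(x*x) + 1%R) +
  (4%R*(A*A) - 2%R*F*((1%R-F)*(1%R-F)) - 4%R*Q*(1%R+F*F)) * (x*x).

Lemma vieta (F Q z1 z2 z3 : C) : z1 <> z3 -> Fc F Q z2 z1 = (RtoC 0) -> Fc F Q z2 z3 = (RtoC 0) ->
  (1%R - F*(z2*z2))*(z1+z3) = - (2%R*z2*(1%R-F-2%R*Q)) /\
  (1%R - F*(z2*z2))*(z1*z3) = z2*z2 - F.
Proof.
  intros Hne H1 H3.
  assert (Hd : z1 - z3 <> (RtoC 0)).
  { intro E. apply Hne. replace z1 with ((z1 - z3) + z3) by ring. rewrite E. ring. }
  split.
  - assert (E : (z1 - z3) * ((1%R - F*(z2*z2))*(z1+z3) + 2%R*z2*(1%R-F-2%R*Q)) = (RtoC 0)).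
    { replace (RtoC 0) with (Fc F Q z2 z1 - Fc F Q z2 z3) by (rewrite H1, H3; ring).
      unfold Fc; ring. }
    destruct (Cint _ _ E) as [E'|E']; [contradiction|].
    replace (- (2%R*z2*(1%R-F-2%R*Q))) with ((1%R - F*(z2*z2))*(z1+z3) - ((1%R - F*(z2*z2))*(z1+z3) + 2%R*z2*(1%R-F-2%R*Q))) by ring.
    rewrite E'; ring.
  - assert (E : (z1 - z3) * ((z2*z2 - F) - (1%R - F*(z2*z2))*(z1*z3)) = (RtoC 0)).
    { replace (RtoC 0) with (z1 * Fc F Q z2 z3 - z3 * Fc F Q z2 z1) by (rewrite H1, H3; ring).
      unfold Fc; ring. }
    destruct (Cint _ _ E) as [E'|E']; [contradiction|].
    replace (z2*z2 - F) with ((1%R - F*(z2*z2))*(z1*z3) + ((z2*z2 - F) - (1%R - F*(z2*z2))*(z1*z3))) by ring.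
    rewrite E'; ring.
Qed.

Lemma core_G (F Q z1 z2 z3 : C) : z1 <> z3 -> Fc F Q z2 z1 = (RtoC 0) -> Fc F Q z2 z3 = (RtoC 0) ->
  Fc F Q z1 z3 = (RtoC 0) -> Gc F Q z2 = (RtoC 0).
Proof.
  intros Hne H1 H3 H13.
  destruct (vieta F Q z1 z2 z3 Hne H1 H3) as [E1 E2].
  set (K := 1%R - F*(z2*z2)) in *.
  assert (HG : Gc F Q z2 = (K*(z1+z3))*(K*(z1+z3)) - F*((K + K*(z1*z3))*(K+K*(z1*z3)))
                 - 4%R*Q*K*(K*(z1*z3))).
  { rewrite E1, E2. unfold Gc, K. ring. }
  rewrite HG. replace (RtoC 0) with (K*K*Fc F Q z1 z3) by (rewrite H13; ring).
  unfold Fc; ring.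
Qed.

Lemma core_V (F Q z1 z2 z3 : C) : z1 <> z3 -> 1%R - F*(z2*z2) <> (RtoC 0) ->
  Fc F Q z2 z1 = (RtoC 0) -> Fc F Q z2 z3 = (RtoC 0) -> 4%R*Q = (1%R-F)*(1%R-F) ->
  (z1+z2)*(z2+z3)*(z3+z1) = z1*z2*z3*(F*F-1%R).
Proof.
  intros Hne HK H1 H3 HQ.
  destruct (vieta F Q z1 z2 z3 Hne H1 H3) as [E1 E2].
  set (K := 1%R - F*(z2*z2)) in *.
  assert (HB : 2%R*z2*(1%R-F-2%R*Q) = z2*(1%R-F*F)).
  { replace (2%R*z2*(1%R-F-2%R*Q)) with (z2*(2%R - 2%R*F - (4%R*Q))) by ring. rewrite HQ. ring. }
  rewrite HB in E1.
  assert (L : K*K*((z1+z2)*(z2+z3)*(z3+z1)) = (K*(z2*z2) + z2*(K*(z1+z3)) + K*(z1*z3))*(K*(z1+z3))) by ring.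
  assert (R : K*K*(z1*z2*z3*(F*F-1%R)) = z2*(K*(z1*z3))*K*(F*F-1%R)) by ring.
  rewrite E1, E2 in L. rewrite E2 in R.
  assert (HKK : K*K <> RtoC 0) by (intro E; destruct (Cint _ _ E); auto).
  assert (D : K*K*((z1+z2)*(z2+z3)*(z3+z1) - z1*z2*z3*(F*F-1%R)) = RtoC 0).
  { replace (K*K*((z1+z2)*(z2+z3)*(z3+z1) - z1*z2*z3*(F*F-1%R))) with
      (K*K*((z1+z2)*(z2+z3)*(z3+z1)) - K*K*(z1*z2*z3*(F*F-1%R))) by ring.
    rewrite L, R. unfold K. ring. }
  destruct (Cint _ _ D) as [D'|D']; [contradiction|].
  replace ((z1+z2)*(z2+z3)*(z3+z1)) with (((z1+z2)*(z2+z3)*(z3+z1) - z1*z2*z3*(F*F-1%R)) + z1*z2*z3*(F*F-1%R)) by ring.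
  rewrite D'; ring.
Qed.

Lemma conv_F (F Q Xi Yi Xj Yj : R) : (Yi^2 = 1 - Xi^2)%R -> (Yj^2 = 1 - Xj^2)%R ->
  Fc F Q (Xi,Yi) (Xj,Yj) = RtoC 2 * (Xi,Yi) * (Xj,Yj) * RtoC (Treal F Q Xi Yi Xj Yj).
Proof.
  intros Hi Hj. unfold Fc, Treal, RtoC. apply injective_projections; simpl; ring [Hi Hj].
Qed.
Lemma F0 (F Q Xi Yi Xj Yj : R) : (Yi^2 = 1 - Xi^2)%R -> (Yj^2 = 1 - Xj^2)%R ->
  Treal F Q Xi Yi Xj Yj = 0%R -> Fc F Q (Xi,Yi) (Xj,Yj) = RtoC 0.
Proof. intros Hi Hj HT. rewrite conv_F by auto. rewrite HT. ring. Qed.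

Lemma znz (X Y : R) : (Y^2 = 1 - X^2)%R -> (X,Y) <> RtoC 0.
Proof. intros H E. injection E as E1 E2. subst. lra. Qed.

Lemma real_R (F Q X1 Y1 X2 Y2 X3 Y3 : R) :
  (Y1^2 = 1 - X1^2)%R -> (Y2^2 = 1 - X2^2)%R -> (Y3^2 = 1 - X3^2)%R ->
  (X1,Y1) <> (X3,Y3) -> Treal F Q X2 Y2 X1 Y1 = 0%R -> Treal F Q X2 Y2 X3 Y3 = 0%R ->
  Treal F Q X1 Y1 X3 Y3 = 0%R ->
  (2*(F*(4*Q-(1-F)^2))*(X2^2-Y2^2) + (4*(1-F-2*Q)^2 - 2*F*(1-F)^2 - 4*Q*(1+F^2)) = 0)%R.
Proof.
  intros H1 H2 H3 Hne T21 T23 T13.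
  pose proof (core_G F Q (X1,Y1) (X2,Y2) (X3,Y3) Hne (F0 _ _ _ _ _ _ H2 H1 T21)
    (F0 _ _ _ _ _ _ H2 H3 T23) (F0 _ _ _ _ _ _ H1 H3 T13)) as HG.
  assert (E : Gc F Q (X2,Y2) = (X2,Y2)*(X2,Y2)*RtoC
     (2*(F*(4*Q-(1-F)^2))*(X2^2-Y2^2) + (4*(1-F-2*Q)^2 - 2*F*(1-F)^2 - 4*Q*(1+F^2)))%R).
  { unfold Gc, RtoC. apply injective_projections; simpl; ring [H2]. }
  rewrite E in HG. destruct (Cint _ _ HG) as [HH|HH].
  - destruct (Cint _ _ HH) as [Z|Z]; exfalso; exact (znz X2 Y2 H2 Z).
  - unfold RtoC in HH. injection HH as HH1. exact HH1.
Qed.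

Lemma real_V (F Q X1 Y1 X2 Y2 X3 Y3 : R) :
  (Y1^2 = 1 - X1^2)%R -> (Y2^2 = 1 - X2^2)%R -> (Y3^2 = 1 - X3^2)%R ->
  (X1,Y1) <> (X3,Y3) -> (0 < F < 1)%R -> Treal F Q X2 Y2 X1 Y1 = 0%R -> Treal F Q X2 Y2 X3 Y3 = 0%R ->
  (4*Q = (1-F)^2)%R ->
  (8*((1+(X1*X2+Y1*Y2))*(1+(X2*X3+Y2*Y3))*(1+(X3*X1+Y3*Y1))) = (F^2-1)^2)%R.
Proof.
  intros H1 H2 H3 Hne HF T21 T23 HQ.
  assert (HK : RtoC 1 - RtoC F * ((X2,Y2)*(X2,Y2)) <> RtoC 0).
  { intro E. unfold RtoC in E. injection E as E1 E2.
    assert (X2^2 <= 1)%R by nra. assert (0 <= X2^2)%R by nra. nra. }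
  assert (HQ' : RtoC 4 * RtoC Q = (RtoC 1 - RtoC F)*(RtoC 1 - RtoC F)).
  { unfold RtoC. apply injective_projections; simpl; nra. }
  pose proof (core_V F Q (X1,Y1) (X2,Y2) (X3,Y3) Hne HK (F0 _ _ _ _ _ _ H2 H1 T21)
    (F0 _ _ _ _ _ _ H2 H3 T23) HQ') as HV.
  apply (f_equal (fun c => fst (c * Cconj c))) in HV.
  unfold RtoC, Cconj in HV. simpl in HV.
  match type of HV with ?l = ?r => transitivity l; [ring [H1 H2 H3] | rewrite HV; ring [H1 H2 H3]] end.
Qed.
End Cx.

Lemma sq0 x : x^2 = 0 -> x = 0.
Proof. intros H. replace (x^2) with (x*x) in H by ring. destruct (Rmult_integral _ _ H); auto. Qed.
Lemma Rdiv_neq_0 x y : x <> 0 -> y <> 0 -> x / y <> 0.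
Proof. intros Hx Hy E. apply Hx. replace x with ((x/y)*y) by (field; auto). rewrite E; ring. Qed.

Lemma refl (a b XP YP XQ YQ XS YS : R) : 0 < b -> 0 < a ->
  YP^2 = 1 - XP^2 -> YQ^2 = 1 - XQ^2 -> YS^2 = 1 - XS^2 ->
  (XP,YP) <> (XQ,YQ) -> (XP,YP) <> (XS,YS) -> (XQ,YQ) <> (XS,YS) ->
  reflects_at a b (a*XQ, b*YQ) (a*XP, b*YP) (a*XS, b*YS) ->
  ((XP-XQ)^2 + (YP-YQ)^2) / dist2 (a*XP, b*YP) (a*XQ, b*YQ) =
  ((XP-XS)^2 + (YP-YS)^2) / dist2 (a*XP, b*YP) (a*XS, b*YS).
Proof.
  intros Hb Ha HP HQ HS NQ NS NQS H.
  unfold reflects_at in H. cbn [fst snd] in H. unfold dist2 in *. cbn [fst snd] in *.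
  set (DQ := (a*XQ - a*XP)^2 + (b*YQ - b*YP)^2) in *.
  set (DS := (a*XS - a*XP)^2 + (b*YS - b*YP)^2) in *.
  assert (pos2 : forall x y, (x, y) <> (XP,YP) -> 0 < (a*x - a*XP)^2 + (b*y - b*YP)^2).
  { intros x y N. destruct (Req_dec x XP) as [e|e].
    - subst. assert (y <> YP) by (intro; subst; auto).
      assert (b*y - b*YP <> 0) by (intro E; apply H0; apply Rmult_eq_reg_l with b; lra).
      assert (0 < (b*y-b*YP)^2) by (rewrite <- Rsqr_pow2; apply Rsqr_pos_lt; auto).
      pose proof (pow2_ge_0 (a*XP - a*XP)). lra.
    - assert (a*x - a*XP <> 0) by (intro E; apply e; apply Rmult_eq_reg_l with a; lra).
      assert (0 < (a*x-a*XP)^2) by (rewrite <- Rsqr_pow2; apply Rsqr_pos_lt; auto).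
      pose proof (pow2_ge_0 (b*y - b*YP)). lra. }
  assert (PQ : 0 < DQ) by (apply pos2; auto).
  assert (PS : 0 < DS) by (apply pos2; auto).
  set (dQ := sqrt DQ) in *. set (dS := sqrt DS) in *.
  assert (dQp : 0 < dQ) by (apply sqrt_lt_R0; auto).
  assert (dSp : 0 < dS) by (apply sqrt_lt_R0; auto).
  assert (dQ2 : dQ*dQ = DQ) by (apply sqrt_sqrt; lra).
  assert (dS2 : dS*dS = DS) by (apply sqrt_sqrt; lra).
  set (ux := (a*XQ - a*XP)/dQ) in *. set (uy := (b*YQ - b*YP)/dQ) in *.
  set (wx := (a*XS - a*XP)/dS) in *. set (wy := (b*YS - b*YP)/dS) in *.
  set (nx := a*XP/a^2) in *. set (ny := b*YP/b^2) in *.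
  assert (U : ux*ux + uy*uy = 1).
  { replace (ux*ux+uy*uy) with (DQ/(dQ*dQ)) by (unfold ux,uy,DQ; field; lra).
    rewrite dQ2; field; lra. }
  assert (W : wx*wx + wy*wy = 1).
  { replace (wx*wx+wy*wy) with (DS/(dS*dS)) by (unfold wx,wy,DS; field; lra).
    rewrite dS2; field; lra. }
  assert (Nn : 0 < nx*nx + ny*ny).
  { unfold nx, ny. replace (a*XP/a^2) with (XP/a) by (field; lra).
    replace (b*YP/b^2) with (YP/b) by (field; lra).
    destruct (Req_dec XP 0) as [e|e].
    - assert (YP <> 0) by (intro; subst; lra).
      assert (YP/b <> 0) by (apply Rdiv_neq_0; lra). nra.
    - assert (XP/a <> 0) by (apply Rdiv_neq_0; lra). nra. }
  assert (KEY : ((ux-wx)*nx + (uy-wy)*ny)*((ux+wx)*nx + (uy+wy)*ny) = 0).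
  { assert (I : (nx*nx+ny*ny)*((ux*ux+uy*uy) - (wx*wx+wy*wy)) =
       ((ux-wx)*nx + (uy-wy)*ny)*((ux+wx)*nx + (uy+wy)*ny) +
       ((ux-wx)*ny - (uy-wy)*nx)*((ux+wx)*ny - (uy+wy)*nx)) by ring.
    rewrite U, W, H in I. lra. }
  assert (GQ : (XP-XQ)^2 + (YP-YQ)^2 = -2*dQ*(ux*nx + uy*ny)).
  { replace (-2*dQ*(ux*nx+uy*ny)) with (-2*(XP*(XQ-XP)+YP*(YQ-YP))) by (unfold ux,uy,nx,ny; field; lra).
    ring [HP HQ]. }
  assert (GS : (XP-XS)^2 + (YP-YS)^2 = -2*dS*(wx*nx + wy*ny)).
  { replace (-2*dS*(wx*nx+wy*ny)) with (-2*(XP*(XS-XP)+YP*(YS-YP))) by (unfold wx,wy,nx,ny; field; lra).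
    ring [HP HS]. }
  rewrite GQ, GS. destruct (Rmult_integral _ _ KEY) as [K|K].
  - replace (-2*dQ*(ux*nx+uy*ny)/dQ) with (-2*(ux*nx+uy*ny)) by (field; lra).
    replace (-2*dS*(wx*nx+wy*ny)/dS) with (-2*(wx*nx+wy*ny)) by (field; lra). nra.
  - exfalso.
    assert (Z : (nx*nx+ny*ny)*((ux+wx)^2 + (uy+wy)^2) = 0).
    { replace ((nx*nx+ny*ny)*((ux+wx)^2 + (uy+wy)^2)) with
        (((ux+wx)*nx + (uy+wy)*ny)^2 + ((ux+wx)*ny - (uy+wy)*nx)^2) by ring.
      rewrite K, H. ring. }
    assert (Z2 : (ux+wx)^2 + (uy+wy)^2 = 0).
    { destruct (Rmult_integral _ _ Z); auto; lra. }
    pose proof (pow2_ge_0 (ux+wx)). pose proof (pow2_ge_0 (uy+wy)).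
    assert (ex : ux + wx = 0) by (apply sq0; lra).
    assert (ey : uy + wy = 0) by (apply sq0; lra).
    set (mu := dQ/dS).
    assert (mup : 0 < mu) by (unfold mu; apply Rdiv_lt_0_compat; auto).
    assert (EX : XQ = XP - mu*(XS-XP)).
    { assert (E' : (XQ - XP) + mu*(XS-XP) = dQ/a*(ux+wx)) by (unfold ux,wx,mu; field; lra).
      rewrite ex in E'. lra. }
    assert (EY : YQ = YP - mu*(YS-YP)).
    { assert (E' : (YQ - YP) + mu*(YS-YP) = dQ/b*(uy+wy)) by (unfold uy,wy,mu; field; lra).
      rewrite ey in E'. lra. }
    rewrite EX, EY in HQ.
    assert (C1 : 2*mu*(1+mu)*(1 - (XP*XS+YP*YS)) = 0).
    { replace (2*mu*(1+mu)*(1 - (XP*XS+YP*YS))) with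
        ((YP - mu*(YS-YP))^2 - (1 - (XP - mu*(XS-XP))^2)) by ring [HP HS]. lra. }
    assert (C2 : XP*XS + YP*YS = 1).
    { assert (mu*(1+mu) <> 0) by nra. destruct (Rmult_integral _ _ C1) as [c|c]; [|lra]. nra. }
    assert (C3 : (XP-XS)^2 + (YP-YS)^2 = 0).
    { replace ((XP-XS)^2 + (YP-YS)^2) with (2 - 2*(XP*XS+YP*YS)) by ring [HP HS]. lra. }
    pose proof (pow2_ge_0 (XP-XS)). pose proof (pow2_ge_0 (YP-YS)).
    apply NS. f_equal; [assert (XP - XS = 0) by (apply sq0; lra) | assert (YP - YS = 0) by (apply sq0; lra)]; lra.
Qed.


Lemma outer_eq a b X1 Y1 X2 Y2 X3 Y3 : 0 < a -> 0 < b ->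
  X1*Y2 - X2*Y1 <> 0 -> X2*Y3 - X3*Y2 <> 0 -> X3*Y1 - X1*Y3 <> 0 ->
  outer_area a b (a*X1,b*Y1) (a*X2,b*Y2) (a*X3,b*Y3) =
  Rabs (a*b*((X2-X1)*(Y3-Y1) - (X3-X1)*(Y2-Y1))^2 / ((X1*Y2 - X2*Y1)*(X2*Y3 - X3*Y2)*(X3*Y1 - X1*Y3))) / 2.
Proof.
  intros Ha Hb D12 D23 D31.
  unfold outer_area, tri_area, tangent_meet. cbn [fst snd].
  f_equal. f_equal.
  assert (E12 : a*X1/a^2*(b*Y2/b^2) - a*X2/a^2*(b*Y1/b^2) = (X1*Y2 - X2*Y1)/(a*b)) by (field; lra).
  assert (E23 : a*X2/a^2*(b*Y3/b^2) - a*X3/a^2*(b*Y2/b^2) = (X2*Y3 - X3*Y2)/(a*b)) by (field; lra).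
  assert (E31 : a*X3/a^2*(b*Y1/b^2) - a*X1/a^2*(b*Y3/b^2) = (X3*Y1 - X1*Y3)/(a*b)) by (field; lra).
  rewrite E12, E23, E31. field. repeat split; lra.
Qed.

Lemma inner_eq a b X1 Y1 X2 Y2 X3 Y3 : 0 < a -> 0 < b ->
  tri_area (a*X1,b*Y1) (a*X2,b*Y2) (a*X3,b*Y3) =
  a*b*Rabs ((X2-X1)*(Y3-Y1) - (X3-X1)*(Y2-Y1)) / 2.
Proof.
  intros Ha Hb. unfold tri_area. cbn [fst snd].
  replace ((a * X2 - a * X1) * (b * Y3 - b * Y1) - (a * X3 - a * X1) * (b * Y2 - b * Y1))
    with ((a*b)*((X2-X1)*(Y3-Y1) - (X3-X1)*(Y2-Y1))) by ring.
  rewrite Rabs_mult, (Rabs_right (a*b)) by nra. field.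
Qed.


Lemma Treal_sym F Q Xi Yi Xj Yj : Treal F Q Xi Yi Xj Yj = Treal F Q Xj Yj Xi Yi.
Proof. unfold Treal; ring. Qed.

Lemma dist2_sym A B : dist2 A B = dist2 B A.
Proof. unfold dist2. f_equal. ring. Qed.

Lemma E_pos Xi Yi Xj Yj : (Xi,Yi) <> (Xj,Yj) -> 0 < (Xi-Xj)^2 + (Yi-Yj)^2.
Proof.
  intros N. pose proof (pow2_ge_0 (Xi-Xj)). pose proof (pow2_ge_0 (Yi-Yj)).
  destruct (Rle_lt_or_eq_dec 0 ((Xi-Xj)^2 + (Yi-Yj)^2)) as [h|h]; [lra|auto|].
  exfalso. apply N. f_equal; [assert (Xi-Xj = 0) by (apply sq0; lra)|assert (Yi-Yj=0) by (apply sq0; lra)]; lra.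
Qed.

Lemma dist2_sq a b Xi Yi Xj Yj :
  dist2 (a*Xi,b*Yi) (a*Xj,b*Yj) * dist2 (a*Xi,b*Yi) (a*Xj,b*Yj) = a^2*(Xi-Xj)^2 + b^2*(Yi-Yj)^2.
Proof.
  unfold dist2. cbn [fst snd]. rewrite sqrt_sqrt.
  - ring.
  - pose proof (pow2_ge_0 (a*Xj - a*Xi)). pose proof (pow2_ge_0 (b*Yj - b*Yi)). lra.
Qed.

Lemma dist2_pos a b Xi Yi Xj Yj : 0 < a -> 0 < b -> (Xi,Yi) <> (Xj,Yj) ->
  0 < dist2 (a*Xi,b*Yi) (a*Xj,b*Yj).
Proof.
  intros Ha Hb N. unfold dist2. cbn [fst snd]. apply sqrt_lt_R0.
  pose proof (E_pos _ _ _ _ N).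
  replace ((a*Xj - a*Xi)^2 + (b*Yj - b*Yi)^2) with (a^2*(Xi-Xj)^2 + b^2*(Yi-Yj)^2) by ring.
  pose proof (pow2_ge_0 (Xi-Xj)). pose proof (pow2_ge_0 (Yi-Yj)).
  assert (0 < a^2) by nra. assert (0 < b^2) by nra.
  destruct (Rle_lt_or_eq_dec 0 ((Xi-Xj)^2)) as [h|h]; [lra| nra |].
  rewrite <- h. nra.
Qed.

Lemma T_from a b u Xi Yi Xj Yj : Yi^2 = 1 - Xi^2 -> Yj^2 = 1 - Xj^2 -> (Xi,Yi) <> (Xj,Yj) ->
  ((Xi-Xj)^2 + (Yi-Yj)^2)^2 = 4*u*(a^2*(Xi-Xj)^2 + b^2*(Yi-Yj)^2) ->
  Treal (u*(a^2-b^2)) (1-u*a^2) Xi Yi Xj Yj = 0.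
Proof.
  intros Hi Hj N H.
  pose proof (E_pos _ _ _ _ N) as EP.
  assert (I : ((Xi-Xj)^2 + (Yi-Yj)^2)^2 - 4*u*(a^2*(Xi-Xj)^2 + b^2*(Yi-Yj)^2) =
     -2*((Xi-Xj)^2 + (Yi-Yj)^2) * Treal (u*(a^2-b^2)) (1-u*a^2) Xi Yi Xj Yj)
    by (unfold Treal; ring [Hi Hj]).
  rewrite H in I. assert (Z : ((Xi-Xj)^2 + (Yi-Yj)^2) * Treal (u*(a^2-b^2)) (1-u*a^2) Xi Yi Xj Yj = 0) by lra.
  destruct (Rmult_integral _ _ Z); [lra|auto].
Qed.

Lemma JL a b u : 0 < b -> b < a -> 0 < u ->
  (a^2-b^2)^2*u^2 + 2*(a^2+b^2)*u - 3 = 0 ->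
  Jconst a b * Lper a b - 4 = (a^2+b^2)*u - 1.
Proof.
  intros Hb Hab Hu Cay.
  assert (Hc : 0 < a^2 - b^2) by nra.
  assert (Hd : delta a b = ((a^2-b^2)^2*u + (a^2+b^2))/2).
  { unfold delta.
    assert (E : a^4 - a^2*b^2 + b^4 = (((a^2-b^2)^2*u + (a^2+b^2))/2)^2).
    { transitivity (((a^2-b^2)^2*((a^2-b^2)^2*u^2 + 2*(a^2+b^2)*u - 3) + 3*(a^2-b^2)^2 + (a^2+b^2)^2)/4).
      - rewrite Cay. field.
      - field. }
    rewrite E. apply sqrt_pow2.
    assert (0 <= (a^2-b^2)^2*u) by (apply Rmult_le_pos; [apply pow2_ge_0|lra]).
    pose proof (pow2_ge_0 a). pose proof (pow2_ge_0 b). lra. }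
  assert (HJ : Jconst a b * Jconst a b = u).
  { unfold Jconst, csq. rewrite Hd.
    replace (2 * (((a ^ 2 - b ^ 2) ^ 2 * u + (a ^ 2 + b ^ 2)) / 2) - a ^ 2 - b ^ 2) with ((a^2-b^2)^2*u) by field.
    replace (sqrt ((a ^ 2 - b ^ 2) ^ 2 * u) / (a ^ 2 - b ^ 2) * (sqrt ((a ^ 2 - b ^ 2) ^ 2 * u) / (a ^ 2 - b ^ 2)))
      with ((sqrt ((a ^ 2 - b ^ 2) ^ 2 * u) * sqrt ((a ^ 2 - b ^ 2) ^ 2 * u)) / (a^2-b^2)^2) by (field; lra).
    rewrite sqrt_sqrt by (apply Rmult_le_pos; [apply pow2_ge_0|lra]). field. lra. }
  unfold Lper.
  replace (Jconst a b * (2 * (delta a b + a ^ 2 + b ^ 2) * Jconst a b)) with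
    (2 * (delta a b + a ^ 2 + b ^ 2) * (Jconst a b * Jconst a b)) by ring.
  rewrite HJ, Hd. nra.
Qed.


Lemma circ_of a b X Y : 0 < a -> 0 < b -> on_ellipse a b (a*X, b*Y) -> Y^2 = 1 - X^2.
Proof. intros Ha Hb H. unfold on_ellipse in H. cbn [fst snd] in H.
  replace ((a*X)^2/a^2) with (X^2) in H by (field; lra).
  replace ((b*Y)^2/b^2) with (Y^2) in H by (field; lra). lra. Qed.

Lemma neq_of a b Xi Yi Xj Yj : 0 < a -> 0 < b -> (a*Xi, b*Yi) <> (a*Xj, b*Yj) -> (Xi,Yi) <> (Xj,Yj).
Proof. intros Ha Hb N E. apply N. injection E as -> ->. reflexivity. Qed.

Lemma F1_aux F bu : 0 < bu -> 1 <= F -> F^2 + 2*F + 4*bu - 3 = 0 -> False.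
Proof. intros. nra. Qed.
Lemma F2_aux F : 0 < F -> F < 1 -> 0 < 1 - F^2.
Proof. intros. nra. Qed.

Lemma main_circ a b X1 Y1 X2 Y2 X3 Y3 : 0 < b -> b < a ->
  three_periodic a b (a*X1,b*Y1) (a*X2,b*Y2) (a*X3,b*Y3) ->
  outer_area a b (a*X1,b*Y1) (a*X2,b*Y2) (a*X3,b*Y3) / tri_area (a*X1,b*Y1) (a*X2,b*Y2) (a*X3,b*Y3)
  = 2 / (Jconst a b * Lper a b - 4).
Proof.
  intros Hb Hab HT. assert (Ha : 0 < a) by lra.
  destruct HT as (O1 & O2 & O3 & N12 & N23 & N31 & R1 & R2 & R3).
  apply circ_of in O1; auto. apply circ_of in O2; auto. apply circ_of in O3; auto.
  apply neq_of in N12; auto. apply neq_of in N23; auto. apply neq_of in N31; auto.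
  assert (N21 : (X2,Y2) <> (X1,Y1)) by auto.
  assert (N32 : (X3,Y3) <> (X2,Y2)) by auto.
  assert (N13 : (X1,Y1) <> (X3,Y3)) by auto.
  pose proof (refl a b X1 Y1 X3 Y3 X2 Y2 Hb Ha O1 O3 O2 N13 N12 N32 R1) as K1.
  pose proof (refl a b X2 Y2 X1 Y1 X3 Y3 Hb Ha O2 O1 O3 N21 N23 N13 R2) as K2.
  pose proof (refl a b X3 Y3 X2 Y2 X1 Y1 Hb Ha O3 O2 O1 N32 N31 N21 R3) as K3.
  set (d12 := dist2 (a*X1,b*Y1) (a*X2,b*Y2)) in *.
  set (d23 := dist2 (a*X2,b*Y2) (a*X3,b*Y3)) in *.
  set (d13 := dist2 (a*X1,b*Y1) (a*X3,b*Y3)) in *.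
  rewrite (dist2_sym (a*X2,b*Y2) (a*X1,b*Y1)) in K2. fold d12 in K2.
  rewrite (dist2_sym (a*X3,b*Y3) (a*X2,b*Y2)) in K3. fold d23 in K3.
  rewrite (dist2_sym (a*X3,b*Y3) (a*X1,b*Y1)) in K3. fold d13 in K3.
  assert (p12 : 0 < d12) by (apply dist2_pos; auto).
  assert (p23 : 0 < d23) by (apply dist2_pos; auto).
  assert (p13 : 0 < d13) by (apply dist2_pos; auto).
  pose proof (E_pos _ _ _ _ N12) as e12. pose proof (E_pos _ _ _ _ N23) as e23.
  pose proof (E_pos _ _ _ _ N13) as e13.
  set (k := ((X1-X2)^2 + (Y1-Y2)^2)/d12).
  assert (kp : 0 < k) by (unfold k; apply Rdiv_lt_0_compat; auto).
  set (u := k^2/4).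
  assert (up : 0 < u) by (unfold u; nra).
  assert (Q12 : ((X1-X2)^2 + (Y1-Y2)^2) = k*d12) by (unfold k; field; lra).
  assert (Q13 : ((X1-X3)^2 + (Y1-Y3)^2) = k*d13).
  { assert (((X1-X3)^2 + (Y1-Y3)^2)/d13 = k) by (unfold k; rewrite K1; auto).
    rewrite <- H. field. lra. }
  assert (Q23 : ((X2-X3)^2 + (Y2-Y3)^2) = k*d23).
  { assert (((X2-X3)^2 + (Y2-Y3)^2)/d23 = k).
    { unfold k. rewrite <- K2. replace ((X2-X1)^2 + (Y2-Y1)^2) with ((X1-X2)^2 + (Y1-Y2)^2) by ring. auto. }
    rewrite <- H. field. lra. }
  assert (S12 : ((X1-X2)^2 + (Y1-Y2)^2)^2 = 4*u*(a^2*(X1-X2)^2 + b^2*(Y1-Y2)^2)).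
  { rewrite Q12. unfold d12. rewrite <- dist2_sq. fold d12. unfold u. field. }
  assert (S13 : ((X1-X3)^2 + (Y1-Y3)^2)^2 = 4*u*(a^2*(X1-X3)^2 + b^2*(Y1-Y3)^2)).
  { rewrite Q13. unfold d13. rewrite <- dist2_sq. fold d13. unfold u. field. }
  assert (S23 : ((X2-X3)^2 + (Y2-Y3)^2)^2 = 4*u*(a^2*(X2-X3)^2 + b^2*(Y2-Y3)^2)).
  { rewrite Q23. unfold d23. rewrite <- dist2_sq. fold d23. unfold u. field. }
  set (F := u*(a^2-b^2)). set (Q := 1 - u*a^2).
  assert (T12 : Treal F Q X1 Y1 X2 Y2 = 0) by (apply T_from; auto).
  assert (T13 : Treal F Q X1 Y1 X3 Y3 = 0) by (apply T_from; auto).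
  assert (T23 : Treal F Q X2 Y2 X3 Y3 = 0) by (apply T_from; auto).
  assert (T21 : Treal F Q X2 Y2 X1 Y1 = 0) by (rewrite Treal_sym; auto).
  assert (T31 : Treal F Q X3 Y3 X1 Y1 = 0) by (rewrite Treal_sym; auto).
  assert (T32 : Treal F Q X3 Y3 X2 Y2 = 0) by (rewrite Treal_sym; auto).
  assert (Fp : 0 < F) by (unfold F; apply Rmult_lt_0_compat; [lra|nra]).
  pose proof (Cx.real_R F Q X1 Y1 X2 Y2 X3 Y3 O1 O2 O3 N13 T21 T23 T13) as RR2.
  pose proof (Cx.real_R F Q X2 Y2 X1 Y1 X3 Y3 O2 O1 O3 N23 T12 T13 T23) as RR1.
  pose proof (Cx.real_R F Q X1 Y1 X3 Y3 X2 Y2 O1 O3 O2 N12 T31 T32 T12) as RR3.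
  assert (HQ : 4*Q = (1-F)^2).
  { destruct (Req_dec (F*(4*Q-(1-F)^2)) 0) as [z|z].
    - destruct (Rmult_integral _ _ z); lra.
    - exfalso. apply (diam_contra F Q X1 Y1 X2 Y2 X3 Y3 O1 O2 O3 N12 N23 N13 T12 T23 T13).
      + apply Rmult_eq_reg_l with (2*(F*(4*Q-(1-F)^2))); [lra|lra].
      + apply Rmult_eq_reg_l with (2*(F*(4*Q-(1-F)^2))); [lra|lra]. }
  assert (CAY : (a^2-b^2)^2*u^2 + 2*(a^2+b^2)*u - 3 = 0).
  { transitivity ((1-F)^2 - 4*Q); [unfold F, Q; ring| rewrite HQ; ring]. }
  assert (CAY' : F^2 + 2*F + 4*b^2*u - 3 = 0).
  { rewrite <- CAY. unfold F. ring. }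
  assert (bu : 0 < b^2*u) by (apply Rmult_lt_0_compat; [apply pow_lt; lra|lra]).
  assert (F1 : F < 1).
  { destruct (Rlt_or_le F 1) as [h|h]; auto. exfalso. apply (F1_aux F (b^2*u) bu h); rewrite <- CAY'; ring. }
  pose proof (Cx.real_V F Q X1 Y1 X2 Y2 X3 Y3 O1 O2 O3 N13 (conj Fp F1) T21 T23 HQ) as PV.
  rewrite (JL a b u Hb Hab up CAY).
  assert (SU : (a^2+b^2)*u - 1 = (1 - F^2)/2).
  { replace ((a^2+b^2)*u) with (F + 2*b^2*u) by (unfold F; ring). lra. }
  rewrite SU.
  assert (F2 : 0 < 1 - F^2) by (apply F2_aux; auto).
  set (w12 := X1*X2+Y1*Y2). set (w23 := X2*X3+Y2*Y3). set (w31 := X3*X1+Y3*Y1).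
  assert (W12 : 2*(1 - w12) = ((X1-X2)^2 + (Y1-Y2)^2)) by (unfold w12; ring [O1 O2]).
  assert (W23 : 2*(1 - w23) = ((X2-X3)^2 + (Y2-Y3)^2)) by (unfold w23; ring [O2 O3]).
  assert (W31 : 2*(1 - w31) = ((X1-X3)^2 + (Y1-Y3)^2)) by (unfold w31; ring [O1 O3]).
  assert (Pp : 0 < (1+w12)*(1+w23)*(1+w31)).
  { assert (0 < (1-F^2)*(1-F^2)) by (apply Rmult_lt_0_compat; lra).
    replace ((1+w12)*(1+w23)*(1+w31)) with ((F^2-1)^2/8) by (unfold w12, w23, w31; lra).
    replace ((F^2-1)^2) with ((1-F^2)*(1-F^2)) by ring. lra. }
  assert (n12 : 1 + w12 <> 0) by (intro z; rewrite z in Pp; lra).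
  assert (n23 : 1 + w23 <> 0) by (intro z; rewrite z in Pp; lra).
  assert (n31 : 1 + w31 <> 0) by (intro z; rewrite z in Pp; lra).
  assert (D12 : (X1*Y2 - X2*Y1)^2 = (1-w12)*(1+w12)) by (unfold w12; ring [O1 O2]).
  assert (D23 : (X2*Y3 - X3*Y2)^2 = (1-w23)*(1+w23)) by (unfold w23; ring [O2 O3]).
  assert (D31 : (X3*Y1 - X1*Y3)^2 = (1-w31)*(1+w31)) by (unfold w31; ring [O1 O3]).
  assert (DD : ((X2-X1)*(Y3-Y1) - (X3-X1)*(Y2-Y1))^2 = 2*(1-w12)*(1-w23)*(1-w31))
    by (unfold w12, w23, w31; ring [O1 O2 O3]).
  assert (nz : forall x y, x^2 = (1-y)*(1+y) -> 0 < 1 - y -> 1 + y <> 0 -> x <> 0).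
  { intros x y h1 h2 h3 z. rewrite z in h1. assert ((1-y)*(1+y) <> 0).
    { intro zz. destruct (Rmult_integral _ _ zz); lra. } lra. }
  assert (nd12 : X1*Y2 - X2*Y1 <> 0) by (apply (nz _ w12); auto; lra).
  assert (nd23 : X2*Y3 - X3*Y2 <> 0) by (apply (nz _ w23); auto; lra).
  assert (nd31 : X3*Y1 - X1*Y3 <> 0) by (apply (nz _ w31); auto; lra).
  rewrite (outer_eq a b X1 Y1 X2 Y2 X3 Y3 Ha Hb nd12 nd23 nd31).
  rewrite (inner_eq a b X1 Y1 X2 Y2 X3 Y3 Ha Hb).
  set (Dl := (X2-X1)*(Y3-Y1) - (X3-X1)*(Y2-Y1)) in *.
  set (dp := (X1*Y2 - X2*Y1)*(X2*Y3 - X3*Y2)*(X3*Y1 - X1*Y3)).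
  assert (Dlp : 0 < Dl^2).
  { rewrite DD. assert (0 < 1 - w12) by lra. assert (0 < 1 - w23) by lra. assert (0 < 1 - w31) by lra.
    apply Rmult_lt_0_compat; [apply Rmult_lt_0_compat|]; [apply Rmult_lt_0_compat| |]; lra. }
  assert (Dlnz : Dl <> 0) by (intro z; rewrite z in Dlp; lra).
  assert (dpnz : dp <> 0).
  { unfold dp. intro z. destruct (Rmult_integral _ _ z) as [z'|z']; [destruct (Rmult_integral _ _ z')|]; auto. }
  assert (aDl : Rabs Dl <> 0) by (apply Rabs_no_R0; auto).
  assert (ab : 0 < a*b) by (apply Rmult_lt_0_compat; lra).
  set (L := Rabs (a * b * Dl ^ 2 / dp) / 2 / (a * b * Rabs Dl / 2)).
  assert (L0 : 0 <= L).
  { unfold L. apply Rmult_le_pos; [apply Rmult_le_pos; [apply Rabs_pos|lra]|].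
    apply Rlt_le, Rinv_0_lt_compat. pose proof (Rabs_pos Dl). assert (0 < Rabs Dl) by lra.
    apply Rmult_lt_0_compat; [apply Rmult_lt_0_compat|]; lra. }
  assert (LL : L^2 = Dl^2/dp^2).
  { unfold L. replace ((Rabs (a * b * Dl ^ 2 / dp) / 2 / (a * b * Rabs Dl / 2))^2) with
      ((Rabs (a * b * Dl ^ 2 / dp))^2 / ((a*b)^2 * (Rabs Dl)^2)) by (field; split; lra).
    rewrite !pow2_abs. field. split; auto; lra. }
  assert (dp2 : dp^2 = ((1-w12)*(1+w12))*((1-w23)*(1+w23))*((1-w31)*(1+w31))).
  { unfold dp. rewrite <- D12, <- D23, <- D31. ring. }
  assert (R0 : 0 < 2 / ((1 - F^2)/2)) by (apply Rdiv_lt_0_compat; lra).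
  assert (LL2 : L^2 = (2 / ((1 - F^2)/2))^2).
  { rewrite LL, dp2, DD.
    assert (PV' : (1+w12)*(1+w23)*(1+w31) = (F^2-1)^2/8) by (unfold w12, w23, w31; lra).
    assert (0 < 1 - w12) by lra. assert (0 < 1 - w23) by lra. assert (0 < 1 - w31) by lra.
    transitivity (2/((1+w12)*(1+w23)*(1+w31))).
    - field. repeat split; lra.
    - rewrite PV'. field. lra. }
  assert (E0 : (L - 2 / ((1 - F^2)/2)) * (L + 2 / ((1 - F^2)/2)) = 0).
  { replace ((L - 2 / ((1 - F^2)/2)) * (L + 2 / ((1 - F^2)/2))) with (L^2 - (2 / ((1 - F^2)/2))^2) by ring.
    rewrite LL2. ring. }
  destruct (Rmult_integral _ _ E0); lra.
Qed.

Theorem mainTheorem9 (a b : R) (P1 P2 P3 : pt) :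
  0 < b -> b < a ->
  three_periodic a b P1 P2 P3 ->
  outer_area a b P1 P2 P3 / tri_area P1 P2 P3 = 2 / (Jconst a b * Lper a b - 4).
Proof.
  intros Hb Hab HT. assert (Ha : 0 < a) by lra.
  destruct P1 as [x1 y1], P2 as [x2 y2], P3 as [x3 y3].
  replace (x1,y1) with (a*(x1/a), b*(y1/b)) in * by (f_equal; field; lra).
  replace (x2,y2) with (a*(x2/a), b*(y2/b)) in * by (f_equal; field; lra).
  replace (x3,y3) with (a*(x3/a), b*(y3/b)) in * by (f_equal; field; lra).
  apply main_circ; auto.
Qed.
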